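(* Let $(\mathcal{X},\mathfrak{X})$ and $(\mathcal{Y},\mathfrak{Y})$ be measurable spaces, let $\mu$ be a finite measure on $(\mathcal{X}\times\mathcal{Y},\mathfrak{X}\times\mathfrak{Y})$, let $f$ be a real-valued $\mu$-integrable function, and let $\nu$ be a finite measure on the same space with $\nu\ll\mu$. Then for every $\epsilon>0$ there exist a finite sub-$\sigma$-algebra $\mathfrak{C}$ of $\mathfrak{X}$ and a finite sub-$\sigma$-algebra $\mathfrak{D}$ of $\mathfrak{Y}$ such that \[ \nu\{|\mu^{\mathfrak{F}}f-f|\ge\epsilon\}<\epsilon \] for every $\sigma$-algebra $\mathfrak{F}$ with $\mathfrak{C}\times\mathfrak{D}\subseteq\mathfrak{F}\subseteq\mathfrak{X}\times\mathfrak{Y}$.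
   Context: For a finite measure $\lambda$ on $(\mathcal{Z},\mathfrak{Z})$, a $\lambda$-integrable $f$ and a sub-$\sigma$-algebra $\mathfrak{F}$, $\lambda^{\mathfrak{F}}f$ denotes the Radon–Nikodym derivative $\mathrm{d}(f\cdot\lambda)|_{\mathfrak{F}}/\mathrm{d}\lambda|_{\mathfrak{F}}$, where $(f\cdot\lambda)(A)=\int_A f\,\mathrm{d}\lambda$. $\mathfrak{C}\times\mathfrak{D}$ denotes the product $\sigma$-algebra. *)

(* Defs.v *)
From HB Require Import structures.
From mathcomp Require Import all_boot all_order all_algebra.
From mathcomp Require Import all_classical all_reals all_analysis.
Set Implicit Arguments. Unset Strict Implicit. Unset Printing Implicit Defensive.
Import Order.TTheory GRing.Theory Num.Theory.
Local Open Scope classical_set_scope.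
Local Open Scope ring_scope.

Definition finite_sub_sigma_algebra {d} {T : measurableType d}
  (C : set (set T)) : Prop :=
  [/\ sigma_algebra setT C, C `<=` measurable & finite_set C].

Definition prod_sigma {X Y : Type} (C : set (set X)) (D : set (set Y))
  : set (set (X * Y)) :=
  <<s [set A `*` B | A in C & B in D] >>.

Definition F_measurable_fun {T : Type} {R : realType} (F : set (set T))
  (g : T -> R) : Prop :=
  forall B : set R, measurable B -> F (g @^-1` B).

(* g is (a version of) lambda^F f = d(f.lambda)|F / d(lambda|F): g is
   F-measurable, lambda-integrable, and has the same integrals as f on every
   set of F. *)
Definition is_cond_exp {d} {T : measurableType d} {R : realType}
  (lam : {measure set T -> \bar R}) (F : set (set T)) (f g : T -> R) : Prop :=
  [/\ F_measurable_fun F g,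
      lam.-integrable setT (EFin \o g) &
      forall A, F A ->
        (\int[lam]_(x in A) (g x)%:E = \int[lam]_(x in A) (f x)%:E)%E].

(* Main.v *)
Require Import Defs.
From HB Require Import structures.
From mathcomp Require Import all_boot all_order all_algebra.
From mathcomp Require Import all_classical all_reals all_analysis.
From mathcomp Require Import measurable_realfun.
Import Order.TTheory GRing.Theory Num.Theory.
Import HBSimple.
Local Open Scope classical_set_scope.
Local Open Scope ring_scope.
Section gen.
Lemma finite_gen {T : Type} (s : seq (set T)) : finite_set <<s [set` s]>>.
Proof.
pose n := size s.
pose phi (x : T) : {ffun 'I_n -> bool} := [ffun i : 'I_n => `[< nth set0 s i x >]].
pose K := [set phi @^-1` [set t | t \in S] | S in [set: {set {ffun 'I_n -> bool}}]].
apply: (@sub_finite_set _ _ K); last exact/finite_image/finite_finset.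
apply: smallest_sub.
- split.
  + exists (finset (fun _ => false)) => //; apply/seteqP; split => x //=; by rewrite inE.
  + move=> _ [S _ <-]; exists (~: S)%SET => //; apply/seteqP; split=> x /=.
      * by rewrite finset.in_setC => /negP.
      * by move=> [_ /negP]; rewrite finset.in_setC.
  + move=> A HA; have H : forall k : nat, exists S : {set {ffun 'I_n -> bool}}, phi @^-1` [set t | t \in S] = A k.
      by move=> k; have [S _ <-] := HA k; exists S.
    have [S HS] := choice H.
    exists (finset (fun t => `[< exists k, t \in S k >])) => //.
    apply/seteqP; split => x /=; rewrite inE.
    * by move=> /asboolP [k hk]; exists k => //; rewrite -HS.
    * by move=> [k _]; rewrite -HS /= => hk; apply/asboolP; exists k.
- move=> A /= As.
  have hi : (index A s < n)%N by rewrite index_mem.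
  exists (finset (fun t : {ffun 'I_n -> bool} => t (Ordinal hi))) => //.
  apply/seteqP; split => x /=; rewrite inE ffunE /= nth_index //; by move/asboolP.
Qed.
End gen.
Section fm.
Context {R : realType}.

Lemma FmP {T : pointedType} (F : set (set T)) (h : T -> R) : sigma_algebra setT F ->
  F_measurable_fun F h <-> measurable_fun (setT : set (g_sigma_algebraType F)) h.
Proof.
move=> sF; split.
- move=> Fh _ B mB; rewrite setTI /= measurable_g_measurableTypeE //; exact: Fh.
- by move=> mh B mB; have := mh measurableT B mB; rewrite setTI /= measurable_g_measurableTypeE.
Qed.

Lemma Fm_sub {T} (F1 F2 : set (set T)) (h : T -> R) :
  F1 `<=` F2 -> F_measurable_fun F1 h -> F_measurable_fun F2 h.
Proof. by move=> sF Fh B mB; apply/sF/Fh. Qed.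

Lemma Fm_add {T : pointedType} F (h1 h2 : T -> R) : sigma_algebra setT F ->
  F_measurable_fun F h1 -> F_measurable_fun F h2 -> F_measurable_fun F (fun x => h1 x + h2 x).
Proof.
move=> sF /(FmP _ _ sF) m1 /(FmP _ _ sF) m2; apply/(FmP _ _ sF); exact: measurable_funD.
Qed.

Lemma Fm_scale {T : pointedType} F (c : R) (h : T -> R) : sigma_algebra setT F ->
  F_measurable_fun F h -> F_measurable_fun F (fun x => c * h x).
Proof.
move=> sF /(FmP _ _ sF) m; apply/(FmP _ _ sF); exact: measurable_funM.
Qed.

Lemma Fm_cst {T : pointedType} F (c : R) : sigma_algebra setT F ->
  F_measurable_fun F (fun _ : T => c).
Proof. by move=> sF; apply/(FmP _ _ sF); exact: measurable_cst. Qed.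

Lemma Fm_indic {T : pointedType} F (U : set T) : sigma_algebra setT F -> F U ->
  F_measurable_fun F (\1_U : T -> R).
Proof.
move=> sF FU; apply/(FmP _ _ sF); apply: measurable_indic.
by rewrite /= measurable_g_measurableTypeE.
Qed.

Lemma Fm_meas {d} {T : measurableType d} F (h : T -> R) : F `<=` measurable ->
  F_measurable_fun F h -> measurable_fun setT h.
Proof. by move=> sF Fh _ B mB; rewrite setTI; apply/sF/Fh. Qed.

End fm.
Arguments FmP {R T F h}.
Arguments Fm_sub {R T F1 F2 h}.
Arguments Fm_add {R T F h1 h2}.
Arguments Fm_scale {R T F c h}.
Arguments Fm_cst {R T F c}.
Arguments Fm_indic {R T F U}.
Arguments Fm_meas {R d T F h}.

Section ps.
Context {d1 d2} {X : measurableType d1} {Y : measurableType d2}.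

Lemma PSmono (C1 C2 : set (set X)) (D1 D2 : set (set Y)) :
  C1 `<=` C2 -> D1 `<=` D2 -> prod_sigma C1 D1 `<=` prod_sigma C2 D2.
Proof.
move=> sC sD; apply: smallest_sub; first exact: smallest_sigma_algebra.
move=> _ [A CA] [B DB] <-; apply: sub_sigma_algebra; exists A; first exact: sC.
by exists B => //; exact: sD.
Qed.

Lemma PSsigma (C : set (set X)) (D : set (set Y)) : sigma_algebra setT (prod_sigma C D).
Proof. exact: smallest_sigma_algebra. Qed.

Lemma PSmeas (C : set (set X)) (D : set (set Y)) :
  C `<=` measurable -> D `<=` measurable -> prod_sigma C D `<=` (measurable : set (set (X * Y))).
Proof.
move=> sC sD; apply: smallest_sub; first exact: sigma_algebra_measurable.
move=> _ [A CA] [B DB] <-; apply: measurableX; [exact: sC | exact: sD].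
Qed.

Lemma gen_meas {d} {T : measurableType d} (s : seq (set T)) :
  [set` s] `<=` measurable -> <<s [set` s]>> `<=` measurable.
Proof. move=> hs; apply: smallest_sub => //; exact: sigma_algebra_measurable. Qed.

Lemma gen_fsa {d} {T : measurableType d} (s : seq (set T)) :
  [set` s] `<=` measurable -> finite_sub_sigma_algebra <<s [set` s]>>.
Proof.
move=> hs; split; [exact: smallest_sigma_algebra | exact: gen_meas | exact: finite_gen].
Qed.

End ps.
Section main.
Context {R : realType} {d1 d2 : measure_display} {X : measurableType d1} {Y : measurableType d2}.
Variable mu : {finite_measure set (X * Y)%type -> \bar R}.
Local Open Scope ereal_scope.

Definition PS (sx : seq (set X)) (sy : seq (set Y)) :=
  prod_sigma <<s [set` sx]>> <<s [set` sy]>>.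

Definition AP (f : X * Y -> R) : Prop :=
  measurable_fun setT f /\
  forall eta : R, (0 < eta)%R -> exists sx sy (h : X * Y -> R),
   [/\ [set` sx] `<=` measurable, [set` sy] `<=` measurable,
       F_measurable_fun (PS sx sy) h,
       mu.-integrable setT (EFin \o h) &
       \int[mu]_x `|(f x - h x)%:E| < eta%:E].

Lemma mabs (u : X * Y -> R) : measurable_fun setT u ->
  measurable_fun setT (fun x => `|(u x)%:E|).
Proof. by move=> mu_; apply: measurableT_comp => //; apply/measurable_EFinP. Qed.

Lemma int_abs_add (u v : X * Y -> R) : measurable_fun setT u -> measurable_fun setT v ->
  \int[mu]_x `|(u x + v x)%:E| <= \int[mu]_x `|(u x)%:E| + \int[mu]_x `|(v x)%:E|.
Proof.
move=> mu_ mv; rewrite -ge0_integralD //; try exact: mabs.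
apply: ge0_le_integral => //.
- by apply: mabs; exact: measurable_funD.
- by apply: emeasurable_funD; exact: mabs.
- by move=> x _; rewrite EFinD; exact: lee_abs_add.
Qed.

Lemma PS_sigma sx sy : sigma_algebra setT (PS sx sy).
Proof. exact: PSsigma. Qed.

Lemma PS_meas sx sy : [set` sx] `<=` measurable -> [set` sy] `<=` measurable ->
  PS sx sy `<=` measurable.
Proof. by move=> hx hy; apply: PSmeas; exact: gen_meas. Qed.
Arguments PS_meas {sx sy}.

Lemma PS_cat sx sy sx' sy' : PS sx sy `<=` PS (sx ++ sx') (sy ++ sy').
Proof.
apply: PSmono; apply: sub_smallest2r => //; try exact: smallest_sigma_algebra;
  by move=> A /=; rewrite mem_cat => ->.
Qed.

Lemma PS_cat2 sx sy sx' sy' : PS sx' sy' `<=` PS (sx ++ sx') (sy ++ sy').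
Proof.
apply: PSmono; apply: sub_smallest2r => //; try exact: smallest_sigma_algebra;
  by move=> A /=; rewrite mem_cat => ->; rewrite orbT.
Qed.


Lemma AP_ext {f g} : f =1 g -> AP f -> AP g.
Proof. by move=> /funext ->. Qed.

Lemma AP_PS sx sy U : [set` sx] `<=` measurable -> [set` sy] `<=` measurable ->
  PS sx sy U -> AP (\1_U).
Proof.
move=> hx hy PU; have mU : measurable U := PS_meas hx hy _ PU.
split; first exact: measurable_indic.
move=> eta eta0; exists sx, sy, (\1_U); split => //.
- exact: Fm_indic (PS_sigma _ _) PU.
- exact: integrable_indic.
- have -> : (fun x => `|(\1_U x - \1_U x)%:E|) = cst (0 : \bar R).
    by apply/funext => x; rewrite subrr abse0.
  by rewrite integral0 lte_fin.
Qed.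

Lemma AP_add f g : AP f -> AP g -> AP (fun x => f x + g x)%R.
Proof.
move=> [mf Hf] [mg Hg]; split; first exact: measurable_funD.
move=> eta eta0.
have e2 : (0 < eta / 2)%R by rewrite divr_gt0.
have [sx1 [sy1 [h1 [hx1 hy1 Fh1 ih1 ef]]]] := Hf _ e2.
have [sx2 [sy2 [h2 [hx2 hy2 Fh2 ih2 eg]]]] := Hg _ e2.
have mh1 := Fm_meas (PS_meas hx1 hy1) Fh1.
have mh2 := Fm_meas (PS_meas hx2 hy2) Fh2.
exists (sx1 ++ sx2), (sy1 ++ sy2), (fun x => h1 x + h2 x)%R; split.
- by move=> A /=; rewrite mem_cat => /orP [] ?; [apply: hx1 | apply: hx2].
- by move=> A /=; rewrite mem_cat => /orP [] ?; [apply: hy1 | apply: hy2].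
- apply: Fm_add; first exact: PS_sigma.
  + exact: Fm_sub (PS_cat _ _ _ _) Fh1.
  + exact: Fm_sub (PS_cat2 _ _ _ _) Fh2.
- have -> : EFin \o (fun x => h1 x + h2 x)%R = (EFin \o h1) \+ (EFin \o h2).
    by apply/funext => x /=; rewrite EFinD.
  exact: integrableD.
- have -> : (fun x => `|(f x + g x - (h1 x + h2 x))%:E|) =
            (fun x => `|((f x - h1 x) + (g x - h2 x))%:E|).
    by apply/funext => x; rewrite opprD addrACA.
  apply: le_lt_trans.
    apply: (int_abs_add (fun x => f x - h1 x)%R (fun x => g x - h2 x)%R);
      exact: measurable_funB.
  by rewrite (splitr eta) EFinD lteD.
Qed.

Lemma AP_scale c f : AP f -> AP (fun x => c * f x)%R.
Proof.
move=> [mf Hf]; split; first exact: measurable_funM.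
move=> eta eta0.
set k := (`|c| + 1)%R.
have k0 : (0 < k)%R by rewrite /k ltr_wpDl.
have e2 : (0 < eta / k)%R by rewrite divr_gt0.
have [sx [sy [h [hx hy Fh ih ef]]]] := Hf _ e2.
have mh := Fm_meas (PS_meas hx hy) Fh.
exists sx, sy, (fun x => c * h x)%R; split => //.
- exact: Fm_scale (PS_sigma _ _) Fh.
- have -> : EFin \o (fun x => c * h x)%R = (fun x => c%:E * (EFin \o h) x).
    by apply/funext => x /=; rewrite EFinM.
  exact: integrableZl.
- apply: (@le_lt_trans _ _ (\int[mu]_x (k%:E * `|(f x - h x)%:E|))).
    apply: ge0_le_integral => //.
    + by apply: mabs; apply: measurable_funB; exact: measurable_funM.
    + by apply: emeasurable_funM => //; apply: mabs; exact: measurable_funB.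
    + move=> x _; rewrite -mulrBr EFinM abseM; apply: lee_wpmul2r => //.
      by rewrite /k /= lee_fin lerDl.
  rewrite ge0_integralZl_EFin //; last 2 first.
    + by apply: mabs; exact: measurable_funB.
    + exact: ltW.
  rewrite -(divfK (negbT (gt_eqF k0)) eta).
  by rewrite mulrC EFinM lte_pmul2l // lte_fin.
Qed.

Lemma AP_lim (f : X * Y -> R) : measurable_fun setT f ->
  (forall eta : R, (0 < eta)%R -> exists g : X * Y -> R, AP g /\ \int[mu]_x `|(f x - g x)%:E| < eta%:E) ->
  AP f.
Proof.
move=> mf H; split => // eta eta0.
have e2 : (0 < eta / 2)%R by rewrite divr_gt0.
have [g [[mg Hg] fg]] := H _ e2.
have [sx [sy [h [hx hy Fh ih gh]]]] := Hg _ e2.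
have mh := Fm_meas (PS_meas hx hy) Fh.
exists sx, sy, h; split => //.
have -> : (fun x => `|(f x - h x)%:E|) = (fun x => `|((f x - g x) + (g x - h x))%:E|).
  by apply/funext => x; rewrite addrA subrK.
apply: le_lt_trans.
  apply: (int_abs_add (fun x => f x - g x)%R (fun x => g x - h x)%R);
    exact: measurable_funB.
by rewrite (splitr eta) EFinD lteD.
Qed.


Lemma AP_zero : AP (fun _ => 0%R).
Proof.
apply: (@AP_ext (\1_set0)); first by move=> x; rewrite indicE in_set0.
apply: (@AP_PS [::] [::]) => //; by case: (PS_sigma [::] [::]).
Qed.

Lemma AP_sum (F : nat -> X * Y -> R) n : (forall k, (k < n)%N -> AP (F k)) ->
  AP (fun x => \sum_(k < n) F k x)%R.
Proof.
elim: n => [|n IH] H.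
  by apply: (@AP_ext _ _ _ AP_zero) => x; rewrite big_ord0.
apply: (@AP_ext (fun x => (\sum_(k < n) F k x) + F n x)%R).
  by move=> x; rewrite big_ord_recr.
apply: AP_add; last exact: H.
by apply: IH => k kn; apply: H; exact: ltnW.
Qed.

Lemma AP_rect A B : measurable A -> measurable B -> AP (\1_(A `*` B)).
Proof.
move=> mA mB; apply: (@AP_PS [:: A] [:: B]).
- by move=> C /=; rewrite inE => /eqP ->.
- by move=> C /=; rewrite inE => /eqP ->.
- apply: sub_sigma_algebra; exists A; first by apply: sub_sigma_algebra; rewrite /= mem_head.
  by exists B => //; apply: sub_sigma_algebra; rewrite /= mem_head.
Qed.

Lemma sum_indic_triv (F : nat -> set (X * Y)) n x : trivIset setT F ->
  (\sum_(k < n) \1_(F k) x = \1_(\bigcup_(k < n) F k) x :> R)%R.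
Proof.
move=> tF.
have [[k kn Fkx]|nF] := pselect (exists2 k, (k < n)%N & F k x).
- rewrite (bigD1 (Ordinal kn)) //= indicE mem_set // big1 ?addr0.
    by rewrite indicE mem_set //; exists k.
  move=> j /eqP jk; rewrite indicE memNset // => Fjx.
  have jk' : nat_of_ord j != k by apply/eqP => e; apply: jk; apply: val_inj.
  move/trivIsetP : tF => /(_ j k Logic.I Logic.I jk') /seteqP [+ _].
  by move=> /(_ x (conj Fjx Fkx)).
- rewrite big1.
    by rewrite indicE memNset // => -[k /= kn Fkx]; apply: nF; exists k.
  move=> j _; rewrite indicE memNset // => Fjx; apply: nF; exists j => //.
Qed.

Lemma sub_lt_fine (a b : \bar R) (e : R) : a \is a fin_num -> b \is a fin_num ->
  (`|fine a - fine b| < e)%R -> a - b < e%:E.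
Proof.
by move=> fa fb h; rewrite -(fineK fa) -(fineK fb) -EFinB lte_fin; exact: le_lt_trans (ler_norm _) h.
Qed.

Lemma int_indicT (A : set (X * Y)) : measurable A -> \int[mu]_x (\1_A x : R)%:E = mu A.
Proof. by move=> mA; rewrite integral_indic // setIT. Qed.

Lemma AP_indic E : measurable E -> AP (\1_E).
Proof.
move=> mE.
pose G := [set A `*` B | A in (measurable : set (set X)) & B in (measurable : set (set Y))].
apply: (@dynkin_induction _ _ G (fun S => AP (\1_S))).
- exact: measurable_prod_measurableType.
- move=> _ _ [A1 mA1 [B1 mB1 <-]] [A2 mA2 [B2 mB2 <-]].
  by exists (A1 `&` A2); [exact: measurableI | exists (B1 `&` B2) => //; [exact: measurableI | rewrite setXI]].
- rewrite -setXTT; exact: AP_rect.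
- by move=> _ [A mA [B mB <-]]; exact: AP_rect.
- move=> S mS HS.
  apply: (@AP_ext (fun x => \1_setT x + (-1) * \1_S x)%R).
    by move=> x; rewrite !indicE in_setT in_setC; case: (x \in S) => /=; rewrite ?mulr1 ?mulr0 ?subrr ?addr0.
  apply: AP_add; last exact: AP_scale.
  rewrite -setXTT; exact: AP_rect.
- move=> F mF tF HF.
  have mU : measurable (\bigcup_k F k) by exact: bigcup_measurable.
  apply: AP_lim; first exact: measurable_indic.
  move=> eta eta0.
  pose EN n := \bigcup_(k < n) F k.
  have mEN n : measurable (EN n) by apply: bigcup_measurable.
  have ENU : \bigcup_n EN n = \bigcup_k F k.
    apply/seteqP; split => x.
    - by move=> [n _ [k _ Fkx]]; exists k.
    - by move=> [k _ Fkx]; exists k.+1 => //; exists k => //=.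
  have ndEN : {homo EN : n m / (n <= m)%N >-> (n <= m)%O}.
    move=> n m nm; rewrite subsetEset => x [k /= kn Fkx]; exists k => //=; exact: leq_trans kn nm.
  have mUN : measurable (\bigcup_n EN n) by rewrite ENU.
  have cv := nondecreasing_cvg_mu (mu := mu) mEN mUN ndEN.
  rewrite ENU in cv.
  have muUfin : mu (\bigcup_k F k) \is a fin_num by exact: fin_num_measure.
  have cv' : (mu \o EN) x @[x --> \oo] --> (fine (mu (\bigcup_k F k)))%:E by rewrite fineK.
  have /fine_cvgP [_ cvf] := cv'.
  have [N _ HN] := cvgr_dist_lt _ _ cvf _ eta0.
  have {HN} /= HN := HN N (leqnn N).
  exists (fun x => \sum_(k < N) \1_(F k) x)%R; split.
    by apply: (AP_sum (fun k => \1_(F k))) => k _; exact: HF.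
  have sub : EN N `<=` \bigcup_k F k by move=> y [k _ Fky]; exists k.
  have -> : (fun x => `|((\1_(\bigcup_k F k) x - \sum_(k < N) \1_(F k) x : R)%R)%:E|)
     = (fun x => (\1_(\bigcup_k F k `\` EN N) x : R)%:E).
    apply/funext => x; rewrite sum_indic_triv // !indicE in_setD.
    case: (boolP (x \in EN N)) => xE.
      by rewrite (mem_set (sub _ (set_mem xE))) /= subrr normr0.
    by rewrite /= subr0 andbT normr_nat.
  rewrite int_indicT; last exact: measurableD.
  rewrite measureD //; last by rewrite ltey_eq; apply/orP; left.
  apply: sub_lt_fine; [exact: fin_num_measure | apply: fin_num_measure; exact: measurableI|].
  by rewrite setIidr.
- by move: mE; rewrite measurable_prod_measurableType.
Qed.


Lemma AP_sfun (g : {sfun (X * Y)%type >-> R}) : AP (fun x => g x).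
Proof.
apply: (AP_ext (fun x => esym (fimfunEord g x))).
set s := finmap.enum_fset _.
apply: (AP_sum (fun k x => s`_k * \1_(g @^-1` [set s`_k]) x)%R) => k _.
apply: AP_scale; apply: AP_indic.
by rewrite -[X in measurable X]setTI; apply: (measurable_funP g) => //.
Qed.

Lemma AP_int (f : X * Y -> R) : mu.-integrable setT (EFin \o f) -> AP f.
Proof.
move=> intf.
have mf : measurable_fun setT f by apply/measurable_EFinP; case/integrableP: intf.
have [g_ [ig cg L1]] := approximation_sfun_integrable measurableT intf.
apply: AP_lim => // eta eta0.
have /fine_cvgP [[N1 _ H1] L1f] := L1.
have [N2 _ H2] := cvgr_dist_lt _ _ L1f _ eta0.
pose n := maxn N1 N2.
have /= h1 := H1 n (leq_maxl _ _).
have /= h2 := H2 n (leq_maxr _ _).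
exists (g_ n); split; first exact: AP_sfun.
rewrite -(fineK h1) in h2 *.
rewrite lte_fin; apply: le_lt_trans h2; rewrite /= sub0r normrN; exact: ler_norm.
Qed.


Lemma part (B : set (X * Y)) (u v w : X * Y -> R) : measurable B ->
   mu.-integrable setT (EFin \o u) -> mu.-integrable setT (EFin \o v) ->
   mu.-integrable setT (EFin \o w) ->
   \int[mu]_(x in B) (u x)%:E = \int[mu]_(x in B) (v x)%:E ->
   \int[mu]_(x in B) ((u x - w x)%R%:E) = \int[mu]_(x in B) ((v x - w x)%R%:E)
   /\ \int[mu]_(x in B) ((w x - u x)%R%:E) = \int[mu]_(x in B) ((w x - v x)%R%:E).
Proof.
move=> mB iu iv iw e.
have iuB := integrableS measurableT mB (@subsetT _ B) iu.
have ivB := integrableS measurableT mB (@subsetT _ B) iv.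
have iwB := integrableS measurableT mB (@subsetT _ B) iw.
have E1 (a b : X * Y -> R) : mu.-integrable B (EFin \o a) -> mu.-integrable B (EFin \o b) ->
    \int[mu]_(x in B) ((a x - b x)%R%:E) = \int[mu]_(x in B) (a x)%:E - \int[mu]_(x in B) (b x)%:E.
  move=> ia ib; rewrite -integralB_EFin //; apply: eq_integral => x _; by rewrite EFinB.
by rewrite !E1 // e.
Qed.

Lemma condexp_L1 (F : set (set (X * Y))) (f g h : X * Y -> R) :
  sigma_algebra setT F -> F `<=` measurable ->
  mu.-integrable setT (EFin \o f) -> is_cond_exp mu F f g ->
  F_measurable_fun F h -> mu.-integrable setT (EFin \o h) ->
  \int[mu]_x `|(g x - h x)%:E| <= \int[mu]_x `|(f x - h x)%:E|.
Proof.
move=> sF Fm intf [Fg intg Hg] Fh inth.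
have mg := Fm_meas Fm Fg; have mh := Fm_meas Fm Fh.
have mf : measurable_fun setT f by apply/measurable_EFinP; case/integrableP: intf.
pose A := (fun x => g x + -1 * h x)%R @^-1` `[0%R, +oo[.
have FA : F A.
  apply: (Fm_add sF Fg (Fm_scale sF Fh)); exact: measurable_itv.
have FAc : F (~` A) by rewrite -setTD; case: sF => _ + _; apply.
have mA := Fm _ FA; have mAc := Fm _ FAc.
have [pA _] := @part A g f h mA intg intf inth (Hg _ FA).
have [_ pAc] := @part (~` A) g f h mAc intg intf inth (Hg _ FAc).
rewrite -(setUv A) !ge0_integral_setU //; first last.
- by apply/disj_setPCl.
- by apply: measurable_funTS; apply: mabs; exact: measurable_funB.
- by apply/disj_setPCl.
- by apply: measurable_funTS; apply: mabs; exact: measurable_funB.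
have mfhA D : measurable_fun D (fun x => (f x - h x)%R%:E).
  by apply: measurable_funTS; apply/measurable_EFinP; exact: measurable_funB.
have mhfA D : measurable_fun D (fun x => (h x - f x)%R%:E).
  by apply: measurable_funTS; apply/measurable_EFinP; exact: measurable_funB.
apply: leeD.
- rewrite (eq_integral (fun x => (g x - h x)%R%:E)); last first.
    move=> x /set_mem; rewrite /A /= in_itv /= andbT mulN1r => gh.
    by rewrite ?abse_EFin ger0_norm.
  rewrite pA; apply: (le_trans (lee_abs _)); exact: le_abse_integral.
- rewrite (eq_integral (fun x => (h x - g x)%R%:E)); last first.
    move=> x /set_mem; rewrite /A /= in_itv /= andbT mulN1r => /negP; rewrite -ltNge => gh.
    by rewrite ?abse_EFin ltr0_norm // opprB.
  rewrite pAc; apply: (le_trans (lee_abs _)); apply: le_trans (le_abse_integral _ _ _) _ => //.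
  by rewrite le_eqVlt; apply/orP; left; apply/eqP; apply: eq_integral => x _; rewrite !abse_EFin distrC.
Qed.

End main.

Theorem corollary1 (R : realType) (d1 d2 : measure_display)
  (X : measurableType d1) (Y : measurableType d2)
  (mu nu : {finite_measure set (X * Y)%type -> \bar R})
  (f : X * Y -> R) :
  mu.-integrable setT (EFin \o f) ->
  nu `<< mu ->
  forall eps : R, 0 < eps ->
  exists (C : set (set X)) (D : set (set Y)),
    [/\ finite_sub_sigma_algebra C, finite_sub_sigma_algebra D &
      forall F : set (set (X * Y)%type),
        sigma_algebra setT F -> prod_sigma C D `<=` F -> F `<=` measurable ->
        forall g : X * Y -> R, is_cond_exp mu F f g ->
          (nu [set z | (eps <= `|g z - f z|)%R] < eps%:E)%E].
Proof.
move=> intf numu eps eps0.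
have [P [N pn]] := Hahn_decomposition (charge_of_finite_measure nu).
have [del [del0 Hdel]] := charge_variation_continuous pn numu eps0.
pose eta := (eps * del / 2)%R.
have eta0 : (0 < eta)%R by rewrite /eta divr_gt0 // mulr_gt0.
have [mf Hf] := AP_int mu f intf.
have [sx [sy [h [hx hy Fh ih fh]]]] := Hf eta eta0.
exists <<s [set` sx]>>, <<s [set` sy]>>; split; [exact: gen_fsa | exact: gen_fsa |].
move=> F sF PSF Fm g cg.
have Fh' : F_measurable_fun F h := Fm_sub PSF Fh.
have mg : measurable_fun setT g by case: cg => Fg _ _; exact: Fm_meas Fm Fg.
pose S := [set z | (eps <= `|g z - f z|)%R].
have mS : measurable S.
  have mn : measurable_fun setT (fun z => `|g z - f z|%R).
    by apply: measurableT_comp => //; exact: measurable_funB.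
  have := mn measurableT _ (measurable_itv `[eps, +oo[); rewrite setTI.
  by congr measurable; apply/seteqP; split => z /=; rewrite in_itv /= andbT.
have key : (eps%:E * mu S <= \int[mu]_x `|(g x - f x)%:E|)%E.
  have := @le_integral_comp_abse _ _ _ mu setT measurableT (fun x => (g x - f x)%:E)
    eps id (@measurable_id _ _ setT) (fun r r0 => r0) (fun x y _ _ xy => xy).
  have mgf : measurable_fun setT (fun x => (g x - f x)%:E).
    by apply/measurable_EFinP; exact: measurable_funB.
  move=> /(_ mgf eps0) /=.
  have -> : setT `&` [set x | (eps%:E <= `|(g x - f x)%:E|)%E] = S.
    by apply/seteqP; split => z /=; rewrite ?abse_EFin lee_fin //; case.
  by [].
have mh : measurable_fun setT h := Fm_meas Fm Fh'.
have I1 : (\int[mu]_x `|(g x - f x)%:E| <=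
    \int[mu]_x `|(g x - h x)%:E| + \int[mu]_x `|(h x - f x)%:E|)%E.
  rewrite (eq_integral (fun x => `|((g x - h x) + (h x - f x))%:E|)%E); last first.
    by move=> x _; rewrite addrA subrK.
  by apply: int_abs_add; exact: measurable_funB.
have I2 := condexp_L1 mu F f g h sF Fm intf cg Fh' ih.
have I3 : (\int[mu]_x `|(h x - f x)%:E| = \int[mu]_x `|(f x - h x)%:E|)%E.
  by apply: eq_integral => x _; rewrite !abse_EFin distrC.
have lt : (eps%:E * mu S < (eps * del)%:E)%E.
  apply: le_lt_trans key _; apply: le_lt_trans I1 _; rewrite I3.
  apply: (@le_lt_trans _ _ (\int[mu]_x `|(f x - h x)%:E| + \int[mu]_x `|(f x - h x)%:E|)%E).
    by apply: leeD.
  by rewrite [X in (_ < X%:E)%E](splitr (eps * del)) EFinD lteD.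
have muS : (mu S < del%:E)%E.
  by move: lt; rewrite EFinM lte_pmul2l // lte_fin.
have h2 := Hdel S mS muS.
have h1 := abse_charge_variation pn mS.
exact: le_lt_trans (le_trans (lee_abs _) h1) h2.
Qed.
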